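(* Let $A_1,\dots,A_m\in\mathbb{C}^{n\times n}$ be Hermitian matrices. There do not exist $P\in\mathrm{GL}_n(\mathbb{C})$, $t\ge 2$ and positive integers $n_1,\dots,n_t$ with $\sum_jn_j=n$ such that every $P^*A_iP$ is block diagonal with diagonal blocks of sizes $n_1,\dots,n_t$ if and only if the only matrices $X\in Z(A_1,\dots,A_m)$ with $X^2=X$ are $0$ and $I_n$.
   Context: For Hermitian $A_1,\dots,A_m\in\mathbb{C}^{n\times n}$, the center is $Z(A_1,\dots,A_m)=\{X\in\mathbb{C}^{n\times n} : (A_iX)^*=A_iX \text{ for all } i\}$, where $^*$ denotes conjugate transpose. *)

(* Defs.v *)
From HB Require Import structures.
From mathcomp Require Import all_boot all_order all_algebra.
From mathcomp Require Import reals complex.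
Set Implicit Arguments. Unset Strict Implicit. Unset Printing Implicit Defensive.
Import Order.TTheory GRing.Theory Num.Theory.
Local Open Scope ring_scope.

Definition ctrmx (C : numClosedFieldType) (m n : nat) (A : 'M[C]_(m, n)) : 'M[C]_(n, m) :=
  (map_mx Num.conj A)^T.

Definition is_hermitian_mx (C : numClosedFieldType) (n : nat) (A : 'M[C]_n) : Prop :=
  ctrmx A = A.

Definition herm_center (C : numClosedFieldType) (m n : nat) (A : 'I_m -> 'M[C]_n)
  (X : 'M[C]_n) : Prop :=
  forall i : 'I_m, ctrmx (A i *m X) = A i *m X.

(* Block index of k for consecutive blocks of sizes s = [n_1; ...; n_t]:
   the number of j < t with n_1 + ... + n_(j+1) <= k (0-based). *)
Definition blk_index (s : seq nat) (k : nat) : nat :=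
  count (fun j => \sum_(l < j.+1) nth 0%N s l <= k)%N (iota 0 (size s)).

Definition block_diag_of (C : numClosedFieldType) (n : nat) (s : seq nat)
  (M : 'M[C]_n) : Prop :=
  forall i j : 'I_n, blk_index s i != blk_index s j -> M i j = 0.

(* Main.v *)
Require Import Defs.
From HB Require Import structures.
From mathcomp Require Import all_boot all_order all_algebra zify.
From mathcomp Require Import reals complex.
Import Order.TTheory GRing.Theory Num.Theory.
Local Open Scope ring_scope.
Lemma ctrmxM {C : numClosedFieldType} m n p (A : 'M[C]_(m,n)) (B : 'M[C]_(n,p)) : ctrmx (A *m B) = ctrmx B *m ctrmx A.
Proof. by rewrite /ctrmx map_mxM trmx_mul. Qed.
Lemma ctrmxK {C : numClosedFieldType} m n (A : 'M[C]_(m,n)) : ctrmx (ctrmx A) = A.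
Proof. by rewrite /ctrmx map_trmx trmxK -map_mx_comp; apply/matrixP=> i j; rewrite !mxE /= conjCK. Qed.
Lemma ctrmx1 {C : numClosedFieldType} n : ctrmx (1%:M : 'M[C]_n) = 1%:M.
Proof. by rewrite /ctrmx map_mx1 trmx1. Qed.
Definition dg {C : numClosedFieldType} {n} (c : 'I_n -> bool) : 'M[C]_n := diag_mx (\row_i (c i)%:R).
Lemma ctrmx_dg {C : numClosedFieldType} n c : ctrmx (dg (C:=C) (n:=n) c) = dg c.
Proof.
apply/matrixP=> i j; rewrite /ctrmx /dg !mxE rmorphMn /= conjC_nat eq_sym.
by case: (eqVneq i j) => [->|] //=.
Qed.
Lemma dg_comm {C : numClosedFieldType} n c (B : 'M[C]_n) :
  B *m dg c = dg c *m B -> forall i j, c i != c j -> B i j = 0.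
Proof.
move=> h i j hij; have /matrixP/(_ i j) := h.
rewrite /dg mul_mx_diag mul_diag_mx !mxE.
move: hij; case: (c i); case: (c j) => //= _.
  by rewrite mulr0 mul1r => <-.
by rewrite mulr1 mul0r => ->.
Qed.
Lemma comm_dg {C : numClosedFieldType} n c (B : 'M[C]_n) :
  (forall i j, c i != c j -> B i j = 0) -> B *m dg c = dg c *m B.
Proof.
move=> h; apply/matrixP=> i j; rewrite /dg mul_mx_diag mul_diag_mx !mxE.
case: (eqVneq (c i) (c j)) => [->|/h ->]; first by rewrite mulrC.
by rewrite mulr0 mul0r.
Qed.
Lemma dg_idem {C : numClosedFieldType} n c : dg (C:=C) (n:=n) c *m dg c = dg c.
Proof.
apply/matrixP=> i j; rewrite /dg mul_diag_mx !mxE.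
by case: (c i); rewrite ?mul1r ?mul0r ?mul0rn.
Qed.
Lemma pid_dg {C : numClosedFieldType} n r : pid_mx r = dg (C:=C) (n:=n) (fun i => (i < r)%N).
Proof.
apply/matrixP=> i j; rewrite /dg !mxE.
case: (eqVneq i j) => [->|hij]; first by rewrite eqxx mulr1n.
by move: hij; rewrite -val_eqE => /negPf /= ->.
Qed.

Lemma cast_sq {F : fieldType} {p n} (e : p = n) (Q0 : 'M[F]_(p,n)) (X : 'M_n) (r : nat) :
  row_free Q0 -> Q0 *m X = pid_mx r *m Q0 ->
  exists Q : 'M_n, Q \in unitmx /\ Q *m X = pid_mx r *m Q.
Proof. move: Q0 X; rewrite e => Q0 X hf hQ; exists Q0; split=> //; by rewrite -row_free_unit. Qed.

Lemma idem_basis {F : fieldType} {n} {X : 'M[F]_n} : X *m X = X -> X != 0 -> X != 1%:M ->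
  exists r, exists Q : 'M[F]_n, [/\ Q \in unitmx, (0 < r < n)%N & Q *m X = pid_mx r *m Q].
Proof.
move=> hXX hX0 hX1.
set Y := 1%:M - X.
have hB1 : row_base X *m X = row_base X.
  have /submxP [D ->] : (row_base X <= X)%MS by rewrite eq_row_base.
  by rewrite -mulmxA hXX.
have hB2 : row_base Y *m X = 0.
  have /submxP [D ->] : (row_base Y <= Y)%MS by rewrite eq_row_base.
  by rewrite -mulmxA /Y mulmxBl hXX mul1mx subrr mulmx0.
have hcap : (X :&: Y)%MS = 0.
  set W := (X :&: Y)%MS.
  have /submxP [D1 e1] : (W <= X)%MS by apply: capmxSl.
  have /submxP [D2 e2] : (W <= Y)%MS by apply: capmxSr.
  have h1 : W *m X = W by rewrite {1}e1 -mulmxA hXX -e1.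
  have h2 : W *m X = 0 by rewrite e2 -mulmxA /Y mulmxBl hXX mul1mx subrr mulmx0.
  by rewrite -h1 h2.
have hsum : (\rank X + \rank Y)%N = n.
  rewrite -(mxrank_disjoint_sum hcap); apply/eqP; rewrite eqn_leq rank_leq_col /=.
  rewrite -{1}(mxrank1 F n); apply: mxrankS.
  have -> : (1%:M : 'M[F]_n) = X + Y by rewrite /Y addrC subrK.
  by apply: addmx_sub_adds.
have hfree : row_free (col_mx (row_base X) (row_base Y)).
  rewrite /row_free -(addsmxE _ _).1.
  by rewrite (adds_eqmx (eq_row_base X) (eq_row_base Y)).1 (mxrank_disjoint_sum hcap).
have hQ0 : col_mx (row_base X) (row_base Y) *m X = pid_mx (\rank X) *m col_mx (row_base X) (row_base Y).
  by rewrite mul_col_mx hB1 hB2 pid_mx_block mul_block_col !mul1mx !mul0mx ?addr0 ?add0r ?mul0mx ?addr0.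
have [Q [hQu hQ]] := cast_sq hsum _ _ _ hfree hQ0.
exists (\rank X), Q; split=> //.
have hY0 : Y != 0 by rewrite /Y subr_eq0 eq_sym.
have hk : (0 < \rank Y)%N by rewrite lt0n mxrank_eq0.
have hr : (0 < \rank X)%N by rewrite lt0n mxrank_eq0.
rewrite hr /=; move: hsum hk; set a := \rank X; set b := \rank Y => hs hk; rewrite -hs; lia.
Qed.
Local Close Scope ring_scope.
Lemma blk2 r n k : (k < n)%N -> (r <= n)%N -> blk_index [:: r; n - r] k = (r <= k)%N.
Proof.
move=> hk hr; rewrite /blk_index /= !big_ord_recr !big_ord0 /=.
have -> : (0 + r + (n - r) <= k)%N = false by apply/negbTE; rewrite -ltnNge; lia.
by rewrite add0n /= !addn0.
Qed.
Lemma blk0 a t : (0 < a)%N -> blk_index (a :: t) 0 = 0%N.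
Proof.
move=> ha; rewrite /blk_index; transitivity (count pred0 (iota 0 (size (a :: t)))); last exact: count_pred0.
apply: eq_count => j /=; rewrite big_ord_recl /=; apply/negbTE; rewrite -ltnNge; lia.
Qed.
Lemma blkL a b t k : (a <= k)%N -> (0 < blk_index (a :: b :: t) k)%N.
Proof.
move=> ha; rewrite /blk_index /= big_ord_recr big_ord0 /= add0n ha //.
Qed.
Local Open Scope ring_scope.

Theorem mainTheorem8 (R : realType) (n m : nat) (A : 'I_m -> 'M[R[i]]_n)
  (hA : forall k, is_hermitian_mx (A k)) :
  ~ (exists (P : 'M[R[i]]_n) (s : seq nat),
        P \in unitmx /\ (2 <= size s)%N /\ all (fun k => 0 < k)%N s /\
        sumn s = n /\
        forall k, block_diag_of s (ctrmx P *m A k *m P))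
  <->
  (forall X : 'M[R[i]]_n, herm_center A X -> X *m X = X ->
     X = 0 \/ X = 1%:M).
Proof.
split.
- move=> hne X hZ hXX.
  case: (eqVneq X 0) => [->|hX0]; first by left.
  case: (eqVneq X 1%:M) => [->|hX1]; first by right.
  exfalso; apply: hne.
  have [r [Q [hQu /andP[hr0 hrn] hQ]]] := idem_basis hXX hX0 hX1.
  exists (invmx Q), [:: r; (n - r)%N]; split; first by rewrite unitmx_inv.
  split=> //; split; first by rewrite /= hr0 subn_gt0 hrn.
  split; first by rewrite /= addn0 subnKC // ltnW.
  move=> k i j; rewrite !blk2 ?ltn_ord ?(ltnW hrn) // => hij.
  set P := invmx Q.
  have hPQ : P *m Q = 1%:M := mulVmx hQu.
  have hQP : Q *m P = 1%:M := mulmxV hQu.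
  set c := fun i : 'I_n => (i < r)%N.
  have hE : Q *m X *m P = dg c by rewrite hQ -pid_dg -mulmxA hQP mulmx1.
  have hAk : ctrmx (A k) = A k := hA k.
  have hAX : ctrmx X *m A k = A k *m X by rewrite -{1}hAk -ctrmxM hZ.
  have hBE : (ctrmx P *m A k *m P) *m dg c = dg c *m (ctrmx P *m A k *m P).
    rewrite -{2}(ctrmx_dg _ c) -hE !ctrmxM !mulmxA.
    have e1 : forall M : 'M_n, M *m P *m Q = M by move=> M; rewrite -mulmxA hPQ mulmx1.
    have e2 : forall M : 'M_n, M *m ctrmx Q *m ctrmx P = M by move=> M; rewrite -mulmxA -ctrmxM hPQ ctrmx1 mulmx1.
    rewrite e1 e2.
    by rewrite -(mulmxA (ctrmx P) (A k) X) -(mulmxA (ctrmx P) (ctrmx X) (A k)) hAX.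
  apply: (dg_comm _ _ _ hBE).
  by move: hij; rewrite /c !ltnNge; case: (r <= i)%N; case: (r <= j)%N.
- move=> hR [P [s [hPu [hs [hpos [hsum hB]]]]]].
  case: s hs hpos hsum hB => [|a [|b t]] //= _ /andP[ha /andP[hb _]] hsum hB.
  set c := fun i : 'I_n => blk_index [:: a, b & t] i == 0%N.
  set Q := invmx P.
  have hPQ : P *m Q = 1%:M := mulmxV hPu.
  have hQP : Q *m P = 1%:M := mulVmx hPu.
  set X := P *m dg c *m Q.
  have hXX : X *m X = X.
    by rewrite /X !mulmxA -(mulmxA _ Q P) hQP mulmx1 -(mulmxA P) dg_idem.
  have hZ : herm_center A X.
    move=> k.
    have hAk : ctrmx (A k) = A k := hA k.
    set B := ctrmx P *m A k *m P.
    have hBE : B *m dg c = dg c *m B.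
      apply: comm_dg => i j h; apply: hB; apply: contraNneq h => e.
      by rewrite /c e.
    have hAq : A k = ctrmx Q *m B *m Q.
      by rewrite /B !mulmxA -ctrmxM hPQ ctrmx1 mul1mx -mulmxA hPQ mulmx1.
    have hBh : ctrmx B = B by rewrite /B !ctrmxM ctrmxK hAk !mulmxA.
    have e : ctrmx Q *m B *m Q *m (P *m dg c *m Q) = ctrmx Q *m (B *m dg c) *m Q.
      by rewrite !mulmxA -(mulmxA _ Q P) hQP mulmx1.
    rewrite /X hAq e hBE.
    by rewrite !ctrmxM !ctrmxK hAk ctrmx_dg -hBE /B !mulmxA.
  have hD : dg c = Q *m X *m P.
    by rewrite /X !mulmxA hQP mul1mx -mulmxA hQP mulmx1.
  have hn0 : (0 < n)%N by rewrite -hsum; lia.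
  have hnL : (n.-1 < n)%N by lia.
  have hL : (a <= n.-1)%N by rewrite -hsum; lia.
  case: (hR X hZ hXX) => hX.
  + have := congr1 (fun M : 'M[R[i]]_n => M (Ordinal hn0) (Ordinal hn0)) hD.
    rewrite hX mulmx0 mul0mx /dg !mxE eqxx /c /= blk0 // eqxx.
    by move/eqP; rewrite oner_eq0.
  + have := congr1 (fun M : 'M[R[i]]_n => M (Ordinal hnL) (Ordinal hnL)) hD.
    rewrite hX mulmx1 hQP /dg !mxE eqxx /c /=.
    have /negPf -> : blk_index [:: a, b & t] n.-1 != 0%N by rewrite -lt0n blkL.
    by move/eqP; rewrite eq_sym oner_eq0.
Qed.
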